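(* Let $\mathfrak S=(S,\xrightarrow{F},\le)$ be a functional WSTS. Then its completion $\widehat{\mathfrak S}$ is a (complete, functional) WSTS if and only if $(S,\le)$ is $\omega^2$-wqo.
   Context: A functional WSTS $(S,\xrightarrow{F},\le)$: $(S,\le)$ is a well partial order (well-founded, no infinite antichain), and $F$ is a finite set of partial monotonic maps $f:S\rightharpoonup S$ (domain upward-closed, $f$ monotone on its domain); transitions are $s\to f(s)$. A WSTS is a monotonic ordered transition system whose order is a well (quasi-)order; a complete functional WSTS is one whose state space is a continuous dcpo which is well-ordered, with partial continuous maps (Scott-open domain, preserving lubs of directed subsets of the domain). Completion: an ideal of $S$ is a nonempty downward-closed directed subset; $\widehat S=\mathrm{Idl}(S)$ ordered by inclusion; for $f\in F$, $\widehat f$ has domain $\{C\in\widehat S\mid C\cap\operatorname{dom}f\neq\emptyset\}$ and $\widehat f(C)=\downarrow f\langle C\cap\operatorname{dom} f\rangle$; $\widehat{\mathfrak S}=(\widehat S,\xrightarrow{\{\widehat f\mid f\in F\}},\subseteq)$. Rado's structure: $X_{\mathrm{Rado}}=\{(m,n)\in\mathbb N^2\mid m<n\}$ with $(m,n)\le(m',n')$ iff ($m=m'$ and $n\le n'$) or $n<m'$. A wqo is $\omega^2$-wqo if it contains no subset order-isomorphic (with the induced order) to $X_{\mathrm{Rado}}$. *)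

(* Defs.v *)
(* Sets are predicates [T -> Prop]; partial maps are [T -> option T]. *)
From Stdlib Require Import List Classical ClassicalEpsilon.
Import ListNotations.

Set Implicit Arguments.

Section Orders.
Variable T : Type.
Variable le : T -> T -> Prop.

Definition partial_order : Prop :=
  (forall x, le x x) /\
  (forall x y z, le x y -> le y z -> le x z) /\
  (forall x y, le x y -> le y x -> x = y).

Definition wf_order : Prop := well_founded (fun x y => le x y /\ ~ le y x).

Definition no_infinite_antichain : Prop :=
  ~ exists a : nat -> T, forall i j, i <> j -> ~ le (a i) (a j).

Definition wpo : Prop := partial_order /\ wf_order /\ no_infinite_antichain.

Definition pdom (f : T -> option T) (x : T) : Prop := f x <> None.

Definition upward_closed (U : T -> Prop) : Prop :=
  forall x y, le x y -> U x -> U y.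

Definition partial_monotone (f : T -> option T) : Prop :=
  upward_closed (pdom f) /\
  forall x y x' y', le x y -> f x = Some x' -> f y = Some y' -> le x' y'.

Definition functional_WSTS (F : list (T -> option T)) : Prop :=
  wpo /\ forall f, In f F -> partial_monotone f.

Definition directed (D : T -> Prop) : Prop :=
  (exists x, D x) /\
  forall x y, D x -> D y -> exists z, D z /\ le x z /\ le y z.

Definition is_lub (D : T -> Prop) (s : T) : Prop :=
  (forall y, D y -> le y s) /\ (forall u, (forall y, D y -> le y u) -> le s u).

Definition dcpo : Prop :=
  partial_order /\ forall D, directed D -> exists s, is_lub D s.

Definition way_below (x y : T) : Prop :=
  forall D s, directed D -> is_lub D s -> le y s -> exists d, D d /\ le x d.

Definition continuous_dcpo : Prop :=
  dcpo /\ forall x, directed (fun y => way_below y x) /\ is_lub (fun y => way_below y x) x.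

Definition scott_open (U : T -> Prop) : Prop :=
  upward_closed U /\
  forall D s, directed D -> is_lub D s -> U s -> exists d, D d /\ U d.

Definition partial_continuous (g : T -> option T) : Prop :=
  scott_open (pdom g) /\
  forall D s, directed D -> (forall d, D d -> pdom g d) -> is_lub D s ->
    exists gs, g s = Some gs /\ is_lub (fun y => exists d, D d /\ g d = Some y) gs.

Definition complete_functional_WSTS (G : list (T -> option T)) : Prop :=
  functional_WSTS G /\ continuous_dcpo /\ forall g, In g G -> partial_continuous g.

End Orders.

Definition rado_le (p q : nat * nat) : Prop :=
  (fst p = fst q /\ snd p <= snd q) \/ snd p < fst q.

(* X_Rado = {(m,n) | m < n}; an order embedding e : X_Rado -> S
   (injective, and e p <= e q <-> p <=_Rado q). *)
Definition rado_embeds (S : Type) (le : S -> S -> Prop) : Prop :=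
  exists e : nat * nat -> S,
    (forall p q, fst p < snd p -> fst q < snd q -> e p = e q -> p = q) /\
    (forall p q, fst p < snd p -> fst q < snd q -> (le (e p) (e q) <-> rado_le p q)).

Definition wqo (S : Type) (le : S -> S -> Prop) : Prop :=
  (forall x, le x x) /\ (forall x y z, le x y -> le y z -> le x z) /\
  wf_order le /\ no_infinite_antichain le.

Definition omega2_wqo (S : Type) (le : S -> S -> Prop) : Prop :=
  wqo le /\ ~ rado_embeds le.

Section Completion.
Variable S : Type.
Variable le : S -> S -> Prop.

Definition is_ideal (C : S -> Prop) : Prop :=
  (exists x, C x) /\
  (forall x y, le x y -> C y -> C x) /\
  (forall x y, C x -> C y -> exists z, C z /\ le x z /\ le y z).

Definition Idl : Type := { C : S -> Prop | is_ideal C }.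

Definition Idl_le (C D : Idl) : Prop := forall x, proj1_sig C x -> proj1_sig D x.

Definition down_image (f : S -> option S) (C : S -> Prop) : S -> Prop :=
  fun y => exists x fx, C x /\ f x = Some fx /\ le y fx.

(* hat f (C) = down f<C ∩ dom f>.  Its domain is the set of C for which this
   set is an ideal; when f is partial monotone this is exactly
   {C | C ∩ dom f <> empty} (nonemptiness of the image). *)
Definition hat_map (f : S -> option S) (C : Idl) : option Idl :=
  match excluded_middle_informative (is_ideal (down_image f (proj1_sig C))) with
  | left p => Some (exist _ (down_image f (proj1_sig C)) p)
  | right _ => None
  end.

Definition hat_maps (F : list (S -> option S)) : list (Idl -> option Idl) :=
  map hat_map F.

End Completion.

(* Main.v *)
Require Import Defs.
From Stdlib Require Import List Classical ClassicalEpsilon FunctionalExtensionality PropExtensionality ProofIrrelevance Lia PeanoNat.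

Definition infinite (X : nat -> Prop) := forall N, exists n, N <= n /\ X n.

Lemma incr_lt (h : nat -> nat) : (forall n, h n < h (S n)) -> forall n m, n < m -> h n < h m.
Proof.
  intros H n m Hnm. induction m. lia.
  destruct (Nat.eq_dec n m). subst. apply H. specialize (H m). assert (n < m) by lia. specialize (IHm H0). lia.
Qed.

Lemma incr_le (h : nat -> nat) : (forall n, h n < h (S n)) -> forall n m, n <= m -> h n <= h m.
Proof.
  intros H n m Hnm. destruct (Nat.eq_dec n m). subst; lia.
  assert (h n < h m) by (apply incr_lt; auto; lia). lia.
Qed.

Lemma incr_rev (h : nat -> nat) : (forall n, h n < h (S n)) -> forall n m, h n < h m -> n < m.
Proof.
  intros H n m Hnm. destruct (Nat.lt_ge_cases n m). auto.
  assert (h m <= h n) by (apply incr_le; auto). lia.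
Qed.

Lemma incr_ge (h : nat -> nat) : (forall n, h n < h (S n)) -> forall n, n <= h n.
Proof. intros H n. induction n. lia. specialize (H n). lia. Qed.

Lemma enum_inf (X : nat -> Prop) : infinite X ->
  exists h : nat -> nat, (forall n, h n < h (S n)) /\ (forall n, X (h n)).
Proof.
  intro H.
  set (sel := fun N => proj1_sig (constructive_indefinite_description _ (H N))).
  assert (Hs : forall N, N <= sel N /\ X (sel N)).
  { intro N. unfold sel. destruct (constructive_indefinite_description _ (H N)); simpl; auto. }
  exists (nat_rect (fun _ => nat) (sel 0) (fun _ m => sel (S m))).
  split; intro n.
  - simpl. destruct (Hs (S (nat_rect (fun _ => nat) (sel 0) (fun _ m => sel (S m)) n))). lia.
  - destruct n; simpl; apply Hs.
Qed.

Lemma inf_two (X : nat -> Prop) : infinite X -> exists i j, i < j /\ X i /\ X j.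
Proof.
  intro H. destruct (H 0) as [i [_ Hi]]. destruct (H (S i)) as [j [? Hj]].
  exists i, j. auto.
Qed.

Lemma R1 (X P : nat -> Prop) : infinite X -> exists Y, infinite Y /\ (forall y, Y y -> X y) /\
  ((forall y, Y y -> P y) \/ (forall y, Y y -> ~ P y)).
Proof.
  intro HX. destruct (classic (infinite (fun y => X y /\ P y))) as [H|H].
  - exists (fun y => X y /\ P y). split; auto. split. intros y [? ?]; auto. left; intros y [? ?]; auto.
  - unfold infinite in H. apply not_all_ex_not in H. destruct H as [N HN].
    exists (fun y => X y /\ N <= y). split.
    + intro M. destruct (HX (max M N)) as [n [? ?]]. exists n. split. lia. split; auto. lia.
    + split. intros y [? ?]; auto. right. intros y [? ?] HP. apply HN. exists y. auto.
Qed.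

Lemma diag (Hom : nat -> (nat -> Prop) -> bool -> Prop)
  (Hstep : forall a X, infinite X -> exists Y b, infinite Y /\ (forall y, Y y -> X y /\ a < y) /\ Hom a Y b)
  (Hmono : forall a Y Y' b, (forall y, Y' y -> Y y) -> Hom a Y b -> Hom a Y' b) :
  forall X, infinite X -> exists Y b, infinite Y /\ (forall y, Y y -> X y) /\
    forall a, Y a -> Hom a (fun y => Y y /\ a < y) b.
Proof.
  intros X0 HX0.
  set (T := {X : nat -> Prop | infinite X}).
  assert (stepP : forall X : T, exists p : (nat * bool) * T,
     proj1_sig X (fst (fst p)) /\ (forall y, proj1_sig (snd p) y -> proj1_sig X y /\ fst (fst p) < y)
     /\ Hom (fst (fst p)) (proj1_sig (snd p)) (snd (fst p))).
  { intros [X HX]. destruct (HX 0) as [a [_ Ha]].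
    destruct (Hstep a X HX) as [Y [b [HY [HYX Hh]]]].
    exists ((a, b), exist _ Y HY). simpl. auto. }
  set (nxt := fun X => proj1_sig (constructive_indefinite_description _ (stepP X))).
  assert (Hn : forall X, proj1_sig X (fst (fst (nxt X))) /\ (forall y, proj1_sig (snd (nxt X)) y -> proj1_sig X y /\ fst (fst (nxt X)) < y)
     /\ Hom (fst (fst (nxt X))) (proj1_sig (snd (nxt X))) (snd (fst (nxt X)))).
  { intro X. unfold nxt. destruct (constructive_indefinite_description _ (stepP X)). simpl. auto. }
  set (st := fun n => nat_rect (fun _ => T) (exist _ X0 HX0) (fun _ Z => snd (nxt Z)) n).
  set (a := fun n => fst (fst (nxt (st n)))).
  set (b := fun n => snd (fst (nxt (st n)))).
  assert (P1 : forall n, proj1_sig (st n) (a n)) by (intro n; exact (proj1 (Hn (st n)))).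
  assert (P2 : forall n y, proj1_sig (st (S n)) y -> proj1_sig (st n) y /\ a n < y) by (intros n y; exact (proj1 (proj2 (Hn (st n))) y)).
  assert (P3 : forall n, Hom (a n) (proj1_sig (st (S n))) (b n)) by (intro n; exact (proj2 (proj2 (Hn (st n))))).
  assert (P4 : forall n m y, n < m -> proj1_sig (st m) y -> proj1_sig (st (S n)) y).
  { intros n m y Hnm. induction m. lia. intro Hy. destruct (Nat.eq_dec n m). subst. auto.
    apply IHm. lia. apply P2. auto. }
  assert (P5 : forall n y, proj1_sig (st n) y -> X0 y).
  { induction n; intros y Hy. exact Hy. apply IHn. apply P2. auto. }
  assert (Ainc : forall n, a n < a (S n)).
  { intro n. apply (P2 n). apply P1. }
  destruct (R1 (fun _ => True) (fun n => b n = true)) as [Z [HZ [_ Hhom]]].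
  { intro N. exists N; auto. }
  exists (fun y => exists n, Z n /\ a n = y).
  assert (Hb : exists bb, forall n, Z n -> b n = bb).
  { destruct Hhom as [H|H]. exists true; auto. exists false. intros n Zn. specialize (H n Zn). destruct (b n); congruence. }
  destruct Hb as [bb Hbb]. exists bb.
  split; [|split].
  - intro N. destruct (HZ N) as [n [? ?]]. exists (a n). split. pose proof (incr_ge a Ainc n). lia. eauto.
  - intros y [n [_ <-]]. eapply P5. apply P1.
  - intros y [n [Zn <-]]. rewrite <- (Hbb n Zn). eapply Hmono. 2: apply (P3 n).
    + intros y [[m [Zm <-]] Hlt]. apply (incr_rev a Ainc) in Hlt. eapply P4. eauto. apply P1.
Qed.

Lemma R2 (X : nat -> Prop) (c : nat -> nat -> Prop) : infinite X -> exists Y, infinite Y /\ (forall y, Y y -> X y) /\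
  ((forall i j, Y i -> Y j -> i < j -> c i j) \/ (forall i j, Y i -> Y j -> i < j -> ~ c i j)).
Proof.
  intro HX.
  assert (Hs : forall a X', infinite X' -> exists Y b, infinite Y /\ (forall y, Y y -> X' y /\ a < y) /\
     (forall y, Y y -> (c a y <-> b = true))).
  { intros a X' HX'. destruct (R1 (fun y => X' y /\ a < y) (c a)) as [Y0 [HY0 [HYX0 Hh0]]].
    + intro N. destruct (HX' (max N (S a))) as [n [? ?]]. exists n. split. lia. split; auto; lia.
    + exists Y0. destruct Hh0 as [H|H]; [exists true|exists false];
      split; auto; split; auto; intros y Hy; split; intro; auto; try congruence.
      exfalso; eapply H; eauto. }
  assert (Hm : forall a (Y Y' : nat -> Prop) (b : bool), (forall y, Y' y -> Y y) ->
     (forall y, Y y -> (c a y <-> b = true)) -> (forall y, Y' y -> (c a y <-> b = true))).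
  { intros a Y Y' b' Hs' H y Hy. apply H, Hs', Hy. }
  destruct (diag (fun a Y b => forall y, Y y -> (c a y <-> b = true)) Hs Hm X HX) as [Y [b [HY [HYX Hh]]]].
  exists Y. split; auto. split; auto. destruct b; [left|right]; intros i j Hi Hj Hij.
  + apply (Hh i Hi j). auto. auto.
  + intro Hc. apply (Hh i Hi j) in Hc. congruence. auto.
Qed.

Lemma R3 (X : nat -> Prop) (c : nat -> nat -> nat -> Prop) : infinite X -> exists Y, infinite Y /\ (forall y, Y y -> X y) /\
  ((forall i j k, Y i -> Y j -> Y k -> i < j -> j < k -> c i j k) \/
   (forall i j k, Y i -> Y j -> Y k -> i < j -> j < k -> ~ c i j k)).
Proof.
  intro HX.
  assert (Hs : forall a X', infinite X' -> exists Y b, infinite Y /\ (forall y, Y y -> X' y /\ a < y) /\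
     (forall y z, Y y -> Y z -> y < z -> (c a y z <-> b = true))).
  { intros a X' HX'. destruct (R2 (fun y => X' y /\ a < y) (c a)) as [Y0 [HY0 [HYX0 Hh0]]].
    + intro N. destruct (HX' (max N (S a))) as [n [? ?]]. exists n. split. lia. split; auto; lia.
    + exists Y0. destruct Hh0 as [H|H]; [exists true|exists false];
      split; auto; split; auto; intros y z Hy Hz Hyz; split; intro; auto; try congruence.
      exfalso; exact (H y z Hy Hz Hyz H0). }
  assert (Hm : forall a (Y Y' : nat -> Prop) (b : bool), (forall y, Y' y -> Y y) ->
     (forall y z, Y y -> Y z -> y < z -> (c a y z <-> b = true)) -> (forall y z, Y' y -> Y' z -> y < z -> (c a y z <-> b = true))).
  { intros a Y Y' b' Hs' H y z Hy Hz. apply H; apply Hs'; auto. }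
  destruct (diag _ Hs Hm X HX) as [Y [b [HY [HYX Hh]]]].
  exists Y. split; auto. split; auto. destruct b; [left|right]; intros i j k Hi Hj Hk Hij Hjk.
  + apply (Hh i Hi j k); try (split; auto; lia); auto.
  + intro Hc. apply (Hh i Hi j k) in Hc; try (split; auto; lia); auto. congruence.
Qed.

Lemma no_desc {T} (R : T -> T -> Prop) : well_founded R -> forall f : nat -> T, ~ (forall n, R (f (S n)) (f n)).
Proof.
  intros Hwf f Hf.
  assert (forall y, Acc R y -> forall f : nat -> T, f 0 = y -> ~ (forall n, R (f (S n)) (f n))).
  { intros y Hy. induction Hy as [y _ IH]. intros g Hg0 Hg.
    exact (IH (g 1) ltac:(rewrite <- Hg0; apply Hg) (fun n => g (S n)) eq_refl (fun n => Hg (S n))). }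
  eapply H. apply Hwf. reflexivity. exact Hf.
Qed.

Lemma wf_of_no_desc {T} (R : T -> T -> Prop) : (forall f : nat -> T, ~ (forall n, R (f (S n)) (f n))) -> well_founded R.
Proof.
  intros H a. apply NNPP. intro Ha.
  set (U := {x : T | ~ Acc R x}).
  assert (st : forall x : U, exists y : U, R (proj1_sig y) (proj1_sig x)).
  { intros [x Hx]. apply NNPP. intro Hn. apply Hx. constructor. intros y Hy.
    apply NNPP. intro Hy'. apply Hn. exists (exist _ y Hy'). exact Hy. }
  set (nxt := fun x => proj1_sig (constructive_indefinite_description _ (st x))).
  apply (H (fun n => proj1_sig (nat_rect (fun _ => U) (exist _ a Ha) (fun _ x => nxt x) n))).
  intro n. simpl. unfold nxt. destruct (constructive_indefinite_description _ _). simpl. auto.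
Qed.

Lemma good {T} (le : T -> T -> Prop) : wf_order le -> no_infinite_antichain le ->
  forall x : nat -> T, exists i j, i < j /\ le (x i) (x j).
Proof.
  intros Hwf Hna x. apply NNPP. intro Hn.
  destruct (R2 (fun _ => True) (fun i j => le (x i) (x j))) as [Y [HY [_ [H1|H1]]]].
  { intro N; exists N; auto. }
  - destruct (inf_two Y HY) as [i [j [? [? ?]]]]. apply Hn. exists i, j. auto.
  - destruct (R2 Y (fun i j => le (x j) (x i)) HY) as [Y' [HY' [HYY [H2|H2]]]].
    + destruct (enum_inf Y' HY') as [h [Hh HhY]].
      apply (no_desc _ Hwf (fun n => x (h n))). intro n. split.
      apply H2; auto. apply (H1 _ _ (HYY _ (HhY n)) (HYY _ (HhY (S n)))). auto.
    + destruct (enum_inf Y' HY') as [h [Hh HhY]]. apply Hna. exists (fun n => x (h n)).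
      intros i j Hij. destruct (Nat.lt_gt_cases i j) as [[Hlt|Hlt] _]. auto.
      * apply H1; auto. apply incr_lt; auto.
      * apply (H2 (h j) (h i)); auto. apply incr_lt; auto.
Qed.

Fixpoint sumto (f : nat -> nat) (n : nat) : nat :=
  match n with 0 => 0 | S m => sumto f m + f m end.

Lemma sumto_ge f n i : i < n -> f i <= sumto f n.
Proof. induction n; intro H; simpl. lia. destruct (Nat.eq_dec i n). subst; lia. assert (i < n) by lia. specialize (IHn H0). lia. Qed.

Lemma rado_from_np (A : Type) (le : A -> A -> Prop)
  (Hrefl : forall x, le x x) (Htrans : forall x y z, le x y -> le y z -> le x z)
  (Hgood : forall x : nat -> A, exists i j, i < j /\ le (x i) (x j))
  (J : nat -> A -> Prop) (HJ : forall i, is_ideal le (J i))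
  (Hanti : forall i j, i <> j -> exists x, J i x /\ ~ J j x)
  (NP : forall i x, J i x -> exists z, J i z /\ ~ le z x) : rado_embeds le.
Proof.
  assert (down : forall i x y, le x y -> J i y -> J i x).
  { intros i x y Hxy Hy. destruct (HJ i) as [_ [H _]]. eauto. }
  assert (dir : forall i x y, J i x -> J i y -> exists z, J i z /\ le x z /\ le y z).
  { intros i. destruct (HJ i) as [_ [_ H]]. exact H. }
  assert (stepP : forall m k x, exists y, J m x -> J m y /\ le x y /\ ~ le y x /\ (k <> m -> ~ J k y)).
  { intros m k x. destruct (classic (J m x)) as [Hx|Hx]; [|exists x; tauto].
    destruct (NP m x Hx) as [z [Hz Hzx]].
    assert (Hw : exists w, J m w /\ (k <> m -> ~ J k w)).
    { destruct (Nat.eq_dec k m). exists x. split; [exact Hx | intro H; contradiction].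
      destruct (Hanti m k) as [w [? ?]]; auto. exists w; auto. }
    destruct Hw as [w [Hw Hwk]].
    destruct (dir m x z Hx Hz) as [u [Hu [Hxu Hzu]]].
    destruct (dir m u w Hu Hw) as [y [Hy [Huy Hwy]]].
    exists y. intros _. split; auto. split. eauto. split.
    intro Hyx. apply Hzx. eauto.
    intros Hkm Hky. apply (Hwk Hkm). eauto. }
  set (stp := fun m k x => proj1_sig (constructive_indefinite_description _ (stepP m k x))).
  assert (Hstp : forall m k x, J m x -> J m (stp m k x) /\ le x (stp m k x) /\ ~ le (stp m k x) x /\ (k <> m -> ~ J k (stp m k x))).
  { intros m k x. unfold stp. destruct (constructive_indefinite_description _ _). simpl. auto. }
  assert (x0P : forall m, exists x, J m x) by (intro m; destruct (HJ m) as [H _]; exact H).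
  set (x0 := fun m => proj1_sig (constructive_indefinite_description _ (x0P m))).
  assert (Hx0 : forall m, J m (x0 m)) by (intro m; unfold x0; destruct (constructive_indefinite_description _ _); auto).
  set (e := fun m n => nat_rect (fun _ => A) (stp m 0 (x0 m)) (fun n y => stp m (S n) y) n).
  assert (E1 : forall m n, J m (e m n)).
  { intros m n. induction n. apply Hstp, Hx0. apply Hstp, IHn. }
  assert (E3 : forall m n, le (e m n) (e m (S n))) by (intros m n; apply Hstp, E1).
  assert (E4 : forall m n, ~ le (e m (S n)) (e m n)) by (intros m n; apply Hstp, E1).
  assert (E2 : forall m n k, k <= n -> k <> m -> ~ J k (e m n)).
  { intros m n. induction n; intros k Hk Hkm.
    - assert (k = 0) by lia. subst. apply Hstp; auto.
    - destruct (Nat.eq_dec k (S n)). subst. apply (Hstp m (S n) (e m n) (E1 m n)); auto.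
      intro H. apply (IHn k); auto. lia. eapply down. apply E3. exact H. }
  assert (Emono : forall m n n', n <= n' -> le (e m n) (e m n')).
  { intros m n n' H. induction H. apply Hrefl. eapply Htrans; eauto. }
  destruct (R3 (fun _ => True) (fun i j k => exists l, le (e i j) (e k l))) as [Y [HY [_ [Hh|Hh]]]].
  { intro N; exists N; auto. }
  2:{ exfalso. destruct (enum_inf Y HY) as [h [Hh1 Hh2]].
      destruct (Hgood (fun t => e (h (2*t)) (h (2*t+1)))) as [t [t' [Htt Hle]]].
      apply (Hh (h (2*t)) (h (2*t+1)) (h (2*t'))); auto.
      apply incr_lt; auto; lia. apply incr_lt; auto; lia.
      exists (h (2*t'+1)). exact Hle. }
  assert (witP : forall i j k, exists l, (exists l, le (e i j) (e k l)) -> le (e i j) (e k l)).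
  { intros i j k. destruct (classic (exists l, le (e i j) (e k l))) as [[l Hl]|Hn].
    exists l; auto. exists 0. intro; contradiction. }
  set (wit := fun i j k => proj1_sig (constructive_indefinite_description _ (witP i j k))).
  assert (Hwit : forall i j k, Y i -> Y j -> Y k -> i < j -> j < k -> le (e i j) (e k (wit i j k))).
  { intros i j k ? ? ? ? ?. unfold wit. destruct (constructive_indefinite_description _ _). simpl. apply l. apply Hh; auto. }
  set (W := fun k => sumto (fun i => sumto (fun j => wit i j k) k) k).
  assert (HW : forall i j k, i < k -> j < k -> wit i j k <= W k).
  { intros i j k Hi Hj. unfold W. eapply Nat.le_trans. 2: apply (sumto_ge _ k i Hi).
    apply (sumto_ge (fun j => wit i j k) k j Hj). }
  set (sel := fun N => proj1_sig (constructive_indefinite_description _ (HY N))).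
  assert (Hsel : forall N, N <= sel N /\ Y (sel N)).
  { intro N. unfold sel. destruct (constructive_indefinite_description _ _). simpl. auto. }
  set (g := nat_rect (fun _ => nat) (sel 0) (fun _ m => sel (S (m + W m)))).
  assert (G1 : forall n, Y (g n)) by (intro n; destruct n; apply Hsel).
  assert (G2 : forall n, g n < g (S n) /\ W (g n) <= g (S n)).
  { intro n. simpl. destruct (Hsel (S (g n + W (g n)))). lia. }
  assert (Ginc : forall n, g n < g (S n)) by (intro n; apply G2).
  set (E := fun p : nat * nat => e (g (fst p)) (g (snd p))).
  assert (Hiff : forall p q, fst p < snd p -> fst q < snd q -> (le (E p) (E q) <-> rado_le p q)).
  { intros [a b] [a' b'] Hp Hq. simpl in *. unfold E, rado_le. simpl. split.
    - intro Hle. destruct (Nat.lt_ge_cases b a') as [Hba|Hba]. right; auto.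
      destruct (Nat.eq_dec a a') as [->|Hne].
      + left. split; auto. destruct (Nat.le_gt_cases b b') as [|Hbb]; auto. exfalso.
        apply (E4 (g a') (g b')). change (stp (g a') (Datatypes.S (g b')) (e (g a') (g b'))) with (e (g a') (Datatypes.S (g b'))).
        eapply Htrans. 2: exact Hle. apply Emono.
        pose proof (incr_lt g Ginc b' b Hbb). lia.
      + exfalso. apply (E2 (g a) (g b) (g a')). apply incr_le; auto.
        intro Heq. apply Hne. destruct (Nat.lt_gt_cases a a') as [[H|H] _]; auto;
        pose proof (incr_lt g Ginc _ _ H); lia.
        eapply down. exact Hle. apply E1.
    - intros [[-> Hbb]|Hba].
      + apply Emono. apply incr_le; auto.
      + eapply Htrans. apply (Hwit (g a) (g b) (g a')); auto; apply incr_lt; auto.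
        apply Emono. eapply Nat.le_trans.
        apply HW; apply incr_lt; auto; lia.
        eapply Nat.le_trans. apply (proj2 (G2 a')). change (g (Datatypes.S a') <= g b'). apply incr_le; auto. }
  exists E. split; auto.
  intros p q Hp Hq Heq.
  assert (H1 : rado_le p q) by (apply Hiff; auto; rewrite Heq; apply Hrefl).
  assert (H2 : rado_le q p) by (apply Hiff; auto; rewrite Heq; apply Hrefl).
  destruct p as [a b], q as [a' b']. unfold rado_le in *; simpl in *.
  assert (a = a' /\ b = b') by lia. destruct H; subst; auto.
Qed.

Lemma incr_inj (h : nat -> nat) : (forall n, h n < h (S n)) -> forall i j, i <> j -> h i <> h j.
Proof.
  intros H i j Hij. destruct (Nat.lt_gt_cases i j) as [[Hl|Hl] _]; auto;
  pose proof (incr_lt h H _ _ Hl); lia.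
Qed.

Lemma rado_from_antichain (A : Type) (le : A -> A -> Prop)
  (Hrefl : forall x, le x x) (Htrans : forall x y z, le x y -> le y z -> le x z)
  (Hgood : forall x : nat -> A, exists i j, i < j /\ le (x i) (x j))
  (J : nat -> A -> Prop) (HJ : forall i, is_ideal le (J i))
  (Hanti : forall i j, i <> j -> exists x, J i x /\ ~ J j x) : rado_embeds le.
Proof.
  destruct (R1 (fun _ => True) (fun i => exists a, J i a /\ forall x, J i x -> le x a)) as [Y [HY [_ [Hp|Hp]]]].
  { intro N; exists N; auto. }
  - exfalso. destruct (enum_inf Y HY) as [h [Hh1 Hh2]].
    set (a := fun k => proj1_sig (constructive_indefinite_description _ (Hp (h k) (Hh2 k)))).
    assert (Ha : forall k, J (h k) (a k) /\ forall x, J (h k) x -> le x (a k)).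
    { intro k. unfold a. destruct (constructive_indefinite_description _ _). auto. }
    destruct (Hgood a) as [k [k' [Hkk Hle]]].
    destruct (Hanti (h k) (h k')) as [x [Hx Hnx]]. apply incr_inj; auto; lia.
    apply Hnx. destruct (HJ (h k')) as [_ [Hd _]]. apply (Hd x (a k')).
    eapply Htrans. apply (proj2 (Ha k)); auto. auto. apply (proj1 (Ha k')).
  - destruct (enum_inf Y HY) as [h [Hh1 Hh2]].
    apply (rado_from_np A le Hrefl Htrans Hgood (fun k => J (h k))); auto.
    + intros i j Hij. apply Hanti. apply incr_inj; auto.
    + intros i x Hx. apply NNPP. intro Hn. apply (Hp (h i) (Hh2 i)). exists x. split; auto.
      intros z Hz. apply NNPP. intro Hzx. apply Hn. exists z. auto.
Qed.

Lemma Idl_eq (A : Type) (le : A -> A -> Prop) (C D : Idl le) :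
  (forall x, proj1_sig C x <-> proj1_sig D x) -> C = D.
Proof.
  destruct C as [C HC], D as [D HD]. simpl. intro H.
  assert (C = D) by (apply functional_extensionality; intro x; apply propositional_extensionality; auto).
  subst. f_equal. apply proof_irrelevance.
Qed.

Lemma union_ideal (A : Type) (le : A -> A -> Prop) (D : Idl le -> Prop) :
  directed (@Idl_le A le) D -> is_ideal le (fun x => exists d, D d /\ proj1_sig d x).
Proof.
  intros [[d0 Hd0] Hdir]. split; [|split].
  - destruct (proj2_sig d0) as [[x Hx] _]. exists x, d0. auto.
  - intros x y Hxy [d [Hd Hy]]. exists d. split; auto. destruct (proj2_sig d) as [_ [H _]]. eauto.
  - intros x y [d1 [Hd1 Hx]] [d2 [Hd2 Hy]]. destruct (Hdir d1 d2 Hd1 Hd2) as [d3 [Hd3 [H1 H2]]].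
    destruct (proj2_sig d3) as [_ [_ H]]. destruct (H x y (H1 x Hx) (H2 y Hy)) as [z [? [? ?]]].
    exists z. split; auto. exists d3. auto.
Qed.

Lemma prin_ideal (A : Type) (le : A -> A -> Prop) (Hrefl : forall x, le x x)
  (Htrans : forall x y z, le x y -> le y z -> le x z) (a : A) : is_ideal le (fun x => le x a).
Proof.
  split; [|split]. exists a; auto. intros x y ? ?; eauto. intros x y ? ?. exists a. auto.
Qed.

Lemma lub_sub (A : Type) (le : A -> A -> Prop) (D : Idl le -> Prop) (s : Idl le) :
  directed (@Idl_le A le) D -> is_lub (@Idl_le A le) D s -> forall x, proj1_sig s x -> exists d, D d /\ proj1_sig d x.
Proof.
  intros Hd [_ Hl] x Hx.
  apply (Hl (exist _ _ (union_ideal A le D Hd))). 2: exact Hx.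
  intros y Hy z Hz. simpl. eauto.
Qed.

Lemma dimg_ideal (A : Type) (le : A -> A -> Prop) (Hrefl : forall x, le x x)
  (Htrans : forall x y z, le x y -> le y z -> le x z) (f : A -> option A) (C : A -> Prop) :
  partial_monotone le f -> is_ideal le C -> (exists x, C x /\ f x <> None) -> is_ideal le (down_image le f C).
Proof.
  intros [Hup Hmon] [_ [Hdown Hdir]] [x [Hx Hfx]]. split; [|split].
  - destruct (f x) as [fx|] eqn:E; [|congruence]. exists fx, x, fx. auto.
  - intros y z Hyz [w [fw [Hw [Hf Hz]]]]. exists w, fw. eauto.
  - intros y z [w1 [f1 [Hw1 [Hf1 Hy]]]] [w2 [f2 [Hw2 [Hf2 Hz]]]].
    destruct (Hdir w1 w2 Hw1 Hw2) as [w [Hw [H1 H2]]].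
    assert (Hd : pdom f w) by (apply (Hup w1); auto; unfold pdom; congruence).
    destruct (f w) as [fw|] eqn:E; [|unfold pdom in Hd; congruence].
    exists fw. split. exists w, fw. auto. split; eapply Htrans; eauto.
Qed.

Lemma hat_some (A : Type) (le : A -> A -> Prop) f (C C' : Idl le) :
  hat_map f C = Some C' -> forall x, proj1_sig C' x <-> down_image le f (proj1_sig C) x.
Proof.
  unfold hat_map. destruct (excluded_middle_informative _); intro H; inversion H. subst. simpl. tauto.
Qed.

Lemma hat_dom (A : Type) (le : A -> A -> Prop) (Hrefl : forall x, le x x)
  (Htrans : forall x y z, le x y -> le y z -> le x z) f (C : Idl le) :
  partial_monotone le f -> (pdom (hat_map f) C <-> exists x, proj1_sig C x /\ f x <> None).
Proof.
  intro Hf. unfold pdom, hat_map. destruct (excluded_middle_informative _) as [Hi|Hi]; split.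
  - intros _. destruct Hi as [[y [x [fx [Hx [Hfx _]]]]] _]. exists x. split; auto. congruence.
  - congruence.
  - congruence.
  - intro H. exfalso. apply Hi. apply dimg_ideal; auto. apply proj2_sig.
Qed.

Lemma ex_some {T} (o : option T) : o <> None -> exists v, o = Some v.
Proof. destruct o; eauto. congruence. Qed.

Lemma rado_K_ideal (A : Type) (le : A -> A -> Prop) (Hrefl : forall x, le x x)
  (Htrans : forall x y z, le x y -> le y z -> le x z) (E : nat * nat -> A)
  (Hiff : forall p q, fst p < snd p -> fst q < snd q -> (le (E p) (E q) <-> rado_le p q)) (m : nat) :
  is_ideal le (fun x => exists n, m < n /\ le x (E (m, n))).
Proof.
  split; [|split].
  - exists (E (m, S m)). exists (S m). auto.
  - intros x y Hxy [n [? Hy]]. exists n. split; auto. exact (Htrans _ _ _ Hxy Hy).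
  - intros x y [n1 [? H1]] [n2 [? H2]]. exists (E (m, max n1 n2)). split. exists (max n1 n2). split; auto. lia.
    split.
    + apply (Htrans _ _ _ H1). apply Hiff; simpl; try lia. left; simpl; split; auto; lia.
    + apply (Htrans _ _ _ H2). apply Hiff; simpl; try lia. left; simpl; split; auto; lia.
Qed.

Theorem theorem4p4 (S : Type) (le : S -> S -> Prop) (F : list (S -> option S)) :
  functional_WSTS le F ->
  (complete_functional_WSTS (@Idl_le S le) (hat_maps le F) <-> omega2_wqo le).
Proof.
  intros [[Hpo [Hwf Hna]] HF]. destruct Hpo as [Hrefl [Htrans Hanti]].
  pose proof (good le Hwf Hna) as Hgood.
  split.
  - intros [[[_ [_ HnaI]] _] _]. split. split; [exact Hrefl | split; [exact Htrans | split; [exact Hwf | exact Hna]]].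
    intros [E [_ Hiff]]. apply HnaI.
    exists (fun m => exist _ _ (rado_K_ideal S le Hrefl Htrans E Hiff m)).
    intros i j Hij Hle. unfold Idl_le in Hle. simpl in Hle.
    destruct (Hle (E (i, Datatypes.S (max i j)))) as [n [Hn HE]].
    exists (Datatypes.S (max i j)). split; auto. lia.
    apply Hiff in HE; simpl; try lia. unfold rado_le in HE. simpl in HE. lia.
  - intros [_ Hnr].
    assert (HIpo : partial_order (@Idl_le S le)).
    { split; [|split]. intros C x; auto. intros C D E H1 H2 x Hx; auto.
      intros C D H1 H2. apply Idl_eq. intro x; split; auto. }
    assert (Hmapin : forall g, In g (hat_maps le F) -> exists f, g = hat_map f /\ partial_monotone le f).
    { intros g Hg. unfold hat_maps in Hg. apply in_map_iff in Hg. destruct Hg as [f [<- Hf]].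
      exists f. split; auto. }
    assert (Hdir_lub : forall (D : Idl le -> Prop) (Hd : directed (@Idl_le S le) D),
              is_lub (@Idl_le S le) D (exist _ _ (union_ideal S le D Hd))).
    { intros D Hd. split. intros y Hy x Hx. simpl. eauto.
      intros u Hu x [d [Hd' Hx]]. apply (Hu d Hd' x Hx). }
    split; [split; [split; [|split]|]|split].
    + exact HIpo.
    + apply wf_of_no_desc. intros f Hf.
      assert (Hx : forall n, exists x, proj1_sig (f n) x /\ ~ proj1_sig (f (Datatypes.S n)) x).
      { intro n. destruct (Hf n) as [_ Hn]. unfold Idl_le in Hn. apply not_all_ex_not in Hn.
        destruct Hn as [x Hx]. exists x. tauto. }
      set (xs := fun n => proj1_sig (constructive_indefinite_description _ (Hx n))).
      assert (Hxs : forall n, proj1_sig (f n) (xs n) /\ ~ proj1_sig (f (Datatypes.S n)) (xs n)).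
      { intro n. unfold xs. destruct (constructive_indefinite_description _ _). auto. }
      assert (Hmono : forall i m x, Datatypes.S i <= m -> proj1_sig (f m) x -> proj1_sig (f (Datatypes.S i)) x).
      { intros i m x Hm. induction Hm; auto. intro H. apply IHHm. apply (Hf m). auto. }
      destruct (Hgood xs) as [i [j [Hij Hle]]].
      apply (proj2 (Hxs i)). destruct (proj2_sig (f (Datatypes.S i))) as [_ [Hd _]].
      apply (Hd _ (xs j) Hle). apply (Hmono i j). lia. apply Hxs.
    + intros [a Ha]. apply Hnr.
      apply (rado_from_antichain S le Hrefl Htrans Hgood (fun i => proj1_sig (a i))).
      intro i; apply proj2_sig.
      intros i j Hij. specialize (Ha i j Hij). unfold Idl_le in Ha. apply not_all_ex_not in Ha.
      destruct Ha as [x Hx]. exists x. tauto.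
    + intros g Hg. destruct (Hmapin g Hg) as [f [-> Hf]]. split.
      * intros C D HCD HC. apply hat_dom in HC; auto. apply hat_dom; auto.
        destruct HC as [x [? ?]]. exists x. auto.
      * intros C D C' D' HCD HC HD x Hx. apply (hat_some _ _ _ _ _ HD).
        apply (hat_some _ _ _ _ _ HC) in Hx. destruct Hx as [w [fw [? ?]]]. exists w, fw. auto.
    + split. split. exact HIpo. intros D Hd. exists (exist _ _ (union_ideal S le D Hd)). apply Hdir_lub.
      assert (Hwb : forall Y X : Idl le, way_below (@Idl_le S le) Y X <->
                 exists a, proj1_sig X a /\ forall y, proj1_sig Y y -> le y a).
      { intros Y X. split.
        - intro H.
          set (D := fun P : Idl le => exists a, proj1_sig X a /\ forall x, proj1_sig P x <-> le x a).
          assert (HD : directed (@Idl_le S le) D).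
          { split.
            - destruct (proj2_sig X) as [[a Ha] _]. exists (exist _ _ (prin_ideal S le Hrefl Htrans a)).
              exists a. simpl. split; auto. tauto.
            - intros P1 P2 [a1 [Ha1 H1]] [a2 [Ha2 H2]].
              destruct (proj2_sig X) as [_ [_ Hd]]. destruct (Hd a1 a2 Ha1 Ha2) as [a3 [Ha3 [? ?]]].
              exists (exist _ _ (prin_ideal S le Hrefl Htrans a3)). split. exists a3. simpl. split; auto. tauto.
              split; intros x Hx; simpl; [apply H1 in Hx | apply H2 in Hx]; eauto. }
          assert (HL : is_lub (@Idl_le S le) D X).
          { split.
            - intros P [a [Ha HP]] x Hx. destruct (proj2_sig X) as [_ [Hd _]]. apply (Hd x a); auto. apply HP; auto.
            - intros u Hu x Hx. apply (Hu (exist _ _ (prin_ideal S le Hrefl Htrans x))).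
              exists x. simpl. split; auto. tauto. simpl. auto. }
          destruct (H D X HD HL (fun x Hx => Hx)) as [d [[a [Ha Hda]] HYd]].
          exists a. split; auto. intros y Hy. apply Hda. apply HYd. auto.
        - intros [a [Ha HY]] D s Hd Hl HXs.
          destruct (lub_sub S le D s Hd Hl a (HXs a Ha)) as [d [Hd' Had]].
          exists d. split; auto. intros y Hy. destruct (proj2_sig d) as [_ [Hdown _]]. eauto. }
      intro X. split; [split|split].
      * destruct (proj2_sig X) as [[a Ha] _]. exists (exist _ _ (prin_ideal S le Hrefl Htrans a)).
        apply Hwb. exists a. simpl. auto.
      * intros Y1 Y2 H1 H2. apply Hwb in H1, H2. destruct H1 as [a1 [Ha1 H1]], H2 as [a2 [Ha2 H2]].
        destruct (proj2_sig X) as [_ [_ Hd]]. destruct (Hd a1 a2 Ha1 Ha2) as [a3 [Ha3 [? ?]]].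
        exists (exist _ _ (prin_ideal S le Hrefl Htrans a3)). split.
        apply Hwb. exists a3. simpl. auto.
        split; intros x Hx; simpl; eauto.
      * intros Y HY x Hx. apply Hwb in HY. destruct HY as [a [Ha HY]].
        destruct (proj2_sig X) as [_ [Hd _]]. eauto.
      * intros u Hu x Hx. apply (Hu (exist _ _ (prin_ideal S le Hrefl Htrans x))).
        apply Hwb. exists x. simpl. auto. simpl. auto.
    + intros g Hg. destruct (Hmapin g Hg) as [f [-> Hf]]. split. split.
      * intros C D HCD HC. apply hat_dom in HC; auto. apply hat_dom; auto.
        destruct HC as [x [? ?]]. exists x. auto.
      * intros D s Hd Hl Hs. apply hat_dom in Hs; auto. destruct Hs as [x [Hx Hfx]].
        destruct (lub_sub S le D s Hd Hl x Hx) as [d [Hd' Hxd]].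
        exists d. split; auto. apply hat_dom; auto. eauto.
      * intros D s Hd HdD Hl.
        destruct Hd as [[d0 Hd0] Hdir].
        assert (Hs : pdom (hat_map f) s).
        { apply hat_dom; auto. destruct (proj1 (hat_dom S le Hrefl Htrans f d0 Hf) (HdD d0 Hd0)) as [x [Hx Hfx]].
          exists x. split; auto. apply (proj1 Hl d0 Hd0). auto. }
        destruct (ex_some _ Hs) as [gs Hgs]. exists gs. split; auto. split.
        -- intros y [d [Hd Hdy]] z Hz. apply (hat_some _ _ _ _ _ Hgs).
           apply (hat_some _ _ _ _ _ Hdy) in Hz. destruct Hz as [w [fw [? ?]]]. exists w, fw.
           split; auto. apply (proj1 Hl d Hd). auto.
        -- intros u Hu z Hz. apply (hat_some _ _ _ _ _ Hgs) in Hz. destruct Hz as [w [fw [Hw [Hfw Hz]]]].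
           destruct (lub_sub S le D s (conj (ex_intro _ d0 Hd0) Hdir) Hl w Hw) as [d [Hd' Hwd]].
           destruct (ex_some _ (HdD d Hd')) as [y Hy].
           apply (Hu y). exists d. auto. apply (hat_some _ _ _ _ _ Hy). exists w, fw. auto.
Qed.
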